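(* For every $n\ge 1$, the linear complexity of $(r_0,r_1,\ldots,r_{n-1})$ over $\mathrm{GF}(2)$ equals $\lfloor (n+1)/2\rfloor$; equivalently, the sequence $(r_0,r_1,\ldots)$ has a perfect linear complexity profile.
   Context: $(r_0,r_1,\ldots)$ is the binary sequence with $r_i=1$ if $i=2^j-1$ for some $j\ge 0$ and $r_i=0$ otherwise. A monic $c\in\mathrm{GF}(2)[x]$ of degree $l$ is a characteristic polynomial of $(s_0,\ldots,s_{n-1})$ if either $l\ge n$ or $c_ls_{k+l}+\cdots+c_0s_k=0$ for all $0\le k\le n-l-1$; the linear complexity of $(s_0,\ldots,s_{n-1})$ is the minimal degree of a characteristic polynomial. *)

(* Defs.v *)
From mathcomp Require Import all_boot all_algebra.
Set Implicit Arguments. Unset Strict Implicit. Unset Printing Implicit Defensive.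
Import GRing.Theory.
Local Open Scope ring_scope.

Definition rseq (i : nat) : 'F_2 :=
  if [exists j : 'I_(i.+2), (2 ^ j)%N == i.+1] then 1 else 0.

Definition char_poly_of (s : nat -> 'F_2) (n : nat) (c : {poly 'F_2}) : Prop :=
  c \is monic /\
  ((n <= (size c).-1)%N \/
   forall k : nat, (k + (size c).-1 < n)%N ->
     \sum_(i < (size c).-1.+1) c`_i * s (k + i)%N = 0).

Definition is_linear_complexity (s : nat -> 'F_2) (n l : nat) : Prop :=
  (exists c : {poly 'F_2}, char_poly_of s n c /\ (size c).-1 = l) /\
  (forall c : {poly 'F_2}, char_poly_of s n c -> (l <= (size c).-1)%N).

(* Main.v *)
Require Import Defs.
From mathcomp Require Import all_boot all_algebra.
From mathcomp Require Import zify ring.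
Import GRing.Theory.
Local Open Scope ring_scope.

Lemma r0 : rseq 0 = 1.
Proof. by rewrite /rseq; case: existsP => // -[]; exists ord0. Qed.

Lemma r_ev x : rseq (x.+1).*2 = 0.
Proof.
rewrite /rseq; case: existsP => // -[j /eqP Hj].
have := congr1 odd Hj; rewrite oddX /= odd_double /=.
case: (val j) Hj => [|j'] //=; rewrite expn0 => /eqP; rewrite eqSS; lia.
Qed.

Lemma r_od x : rseq x.*2.+1 = rseq x.
Proof.
rewrite /rseq; congr (if _ then _ else _).
apply/existsP/existsP => -[j /eqP Hj].
  case: j Hj => [[|j] Hj] /= H.
    by move: H; rewrite expn0; lia.
  rewrite expnS in H.
  have Hx : (2 ^ j = x.+1)%N by lia.
  have Hl := ltn_expl j (isT : 1 < 2)%N.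
  have hj : (j < x.+2)%N by lia.
  by exists (Ordinal hj); rewrite /= Hx.
have Hl := ltn_expl j (isT : 1 < 2)%N.
have hj : (j.+1 < x.*2.+3)%N by move: (ltn_ord j); lia.
by exists (Ordinal hj); rewrite /= expnS Hj; apply/eqP; lia.
Qed.


Lemma sum_even M (f : nat -> 'F_2) :
  \sum_(i < M.*2) f i = \sum_(i < M) f i.*2 + \sum_(i < M) f i.*2.+1.
Proof.
elim: M => [|M IH]; first by rewrite !big_ord0 addr0.
rewrite doubleS !big_ord_recr /= IH.
by rewrite -!addrA; congr (_ + _); rewrite addrC -!addrA; congr (_ + _); rewrite addrC.
Qed.

Lemma sum_odd M (f : nat -> 'F_2) :
  \sum_(i < M.*2.+1) f i = \sum_(i < M.+1) f i.*2 + \sum_(i < M) f i.*2.+1.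
Proof.
rewrite big_ord_recr /= sum_even big_ord_recr /=.
by rewrite -!addrA; congr (_ + _); rewrite addrC.
Qed.

Definition rs (i : nat) : 'F_2 := rseq i.+1.
Definition W (s : nat -> 'F_2) (c : nat -> 'F_2) (N k : nat) : 'F_2 :=
  \sum_(i < N) c i * s (k + i)%N.
Definition PA (s : nat -> 'F_2) (N : nat) : Prop := forall c : nat -> 'F_2,
  (forall k, (k < N)%N -> W s c N k = 0) -> forall i, (i < N)%N -> c i = 0.

Lemma ev_od (c : nat -> 'F_2) E O :
  (forall i, (i < E)%N -> c i.*2 = 0) -> (forall i, (i < O)%N -> c i.*2.+1 = 0) ->
  forall i, (i < E + O)%N -> (O <= E <= O.+1)%N -> c i = 0.
Proof.
move=> He Ho i hi hOE; rewrite -(odd_double_half i).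
case: (odd i) (odd_double_half i) => /= Hi.
  rewrite add1n; apply: Ho; lia.
rewrite add0n; apply: He; lia.
Qed.

Lemma Wodd s c M k : W s c M.*2.+1 k =
  \sum_(i < M.+1) c i.*2 * s (k + i.*2)%N + \sum_(i < M) c i.*2.+1 * s (k + i.*2.+1)%N.
Proof. exact: (sum_odd M (fun i => c i * s (k + i)%N)). Qed.
Lemma Wev s c M k : W s c M.*2 k =
  \sum_(i < M) c i.*2 * s (k + i.*2)%N + \sum_(i < M) c i.*2.+1 * s (k + i.*2.+1)%N.
Proof. exact: (sum_even M (fun i => c i * s (k + i)%N)). Qed.

Lemma rE1 a b : rseq (a.*2 + b.*2.+1)%N = rseq (a+b)%N.
Proof. by rewrite -(r_od (a+b)); congr rseq; lia. Qed.
Lemma rE2 a b : rseq (a.*2.+1 + b.*2)%N = rseq (a+b)%N.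
Proof. by rewrite -(r_od (a+b)); congr rseq; lia. Qed.
Lemma rE3 a b : rseq (a.*2.+1 + b.*2.+1)%N = 0.
Proof. by rewrite -(r_ev (a+b)); congr rseq; lia. Qed.
Lemma rE4 a b : rseq ((a.+1).*2 + b.*2)%N = 0.
Proof. by rewrite -(r_ev (a+b)); congr rseq; lia. Qed.
Lemma rE5 b : rseq (0.*2 + (b.+1).*2)%N = 0.
Proof. by rewrite -(r_ev b); congr rseq; lia. Qed.
Lemma sE1 a b : rs (a.*2 + b.*2)%N = rseq (a+b)%N.
Proof. by rewrite /rs -(r_od (a+b)); congr rseq; lia. Qed.
Lemma sE2 a b : rs (a.*2 + b.*2.+1)%N = 0.
Proof. by rewrite /rs -(r_ev (a+b)); congr rseq; lia. Qed.
Lemma sE3 a b : rs (a.*2.+1 + b.*2)%N = 0.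
Proof. by rewrite /rs -(r_ev (a+b)); congr rseq; lia. Qed.
Lemma sE4 a b : rs (a.*2.+1 + b.*2.+1)%N = rs (a+b)%N.
Proof. by rewrite /rs -(r_od (a+b).+1); congr rseq; lia. Qed.

Lemma AB N : PA rseq N /\ PA rs N.
Proof.
elim/ltn_ind: N => N IH.
have [M [HN|HN]] : exists M, N = M.*2.+1 \/ N = M.*2.
  exists N./2; case: (odd N) (odd_double_half N) => /= Hi; [left|right]; lia.
all: subst N.
-
  have [AM BM] : PA rseq M /\ PA rs M by apply: IH; lia.
  have HA : PA rseq M.*2.+1.
    move=> c Hc.
    have Ho : forall i, (i < M)%N -> c i.*2.+1 = 0.
      apply: (BM (fun i => c i.*2.+1)) => k hk.
      have := Hc (k.+1).*2 ltac:(lia); rewrite Wodd big1 ?add0r;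
        last by move=> i _; rewrite rE4 mulr0.
      by rewrite (eq_bigr (fun i : 'I_M => c i.*2.+1 * rs (k + i))) // => i _; rewrite rE1 addSn.
    have He0 : c 0%N = 0.
      have := Hc 0%N ltac:(lia); rewrite Wodd [X in _ + X]big1;
        last by move=> i _; rewrite Ho // mul0r.
      rewrite addr0 big_ord_recl big1 /=.
        by rewrite r0 mulr1 addr0.
      by move=> i _; rewrite rE5 mulr0.
    have He : forall i, (i < M)%N -> c (i.+1).*2 = 0.
      apply: (BM (fun i => c (i.+1).*2)) => k hk.
      have := Hc k.*2.+1 ltac:(lia); rewrite Wodd [X in _ + X]big1;
        last by move=> i _; rewrite rE3 mulr0.
      rewrite addr0 big_ord_recl /= He0 mul0r add0r.
      by rewrite (eq_bigr (fun i : 'I_M => c (i.+1).*2 * rs (k + i))) // => i _; rewrite rE2 /rs addnS.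
    move=> i hi; apply: (ev_od c M.+1 M) => //; try lia.
    by case=> [|j] hj //; apply: He.
  split => //.
  have AM1 : PA rseq M.+1.
    case: (posnP M) => [M0|Mpos]; first by move: HA; rewrite M0.
    by apply: (proj1 (IH _ _)); lia.
  move=> c Hc.
  have He : forall i, (i < M.+1)%N -> c i.*2 = 0.
    apply: (AM1 (fun i => c i.*2)) => k hk.
    have := Hc k.*2 ltac:(lia); rewrite Wodd [X in _ + X]big1;
      last by move=> i _; rewrite sE2 mulr0.
    by rewrite addr0 (eq_bigr (fun i : 'I_M.+1 => c i.*2 * rseq (k + i))) // => i _; rewrite sE1.
  have Ho : forall i, (i < M)%N -> c i.*2.+1 = 0.
    apply: (BM (fun i => c i.*2.+1)) => k hk.
    have := Hc k.*2.+1 ltac:(lia); rewrite Wodd big1 ?add0r;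
      last by move=> i _; rewrite sE3 mulr0.
    by rewrite (eq_bigr (fun i : 'I_M => c i.*2.+1 * rs (k + i))) // => i _; rewrite sE4.
  move=> i hi; apply: (ev_od c M.+1 M) => //; lia.
- case: M IH => [|M] IH.
    by split => c _ i.
  have [AM1 BM1] : PA rseq M.+1 /\ PA rs M.+1 by apply: IH; lia.
  split => c Hc.
  + have He : forall i, (i < M.+1)%N -> c i.*2 = 0.
      apply: (AM1 (fun i => c i.*2)) => k hk.
      have := Hc k.*2.+1 ltac:(lia); rewrite Wev [X in _ + X]big1;
        last by move=> i _; rewrite rE3 mulr0.
      by rewrite addr0 (eq_bigr (fun i : 'I_M.+1 => c i.*2 * rseq (k + i))) // => i _; rewrite rE2.
    have Ho : forall i, (i < M.+1)%N -> c i.*2.+1 = 0.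
      apply: (AM1 (fun i => c i.*2.+1)) => k hk.
      have := Hc k.*2 ltac:(lia); rewrite Wev big1 ?add0r;
        last by move=> i _; rewrite He // mul0r.
      by rewrite (eq_bigr (fun i : 'I_M.+1 => c i.*2.+1 * rseq (k + i))) // => i _; rewrite rE1.
    move=> i hi; apply: (ev_od c M.+1 M.+1) => //; lia.
  + have He : forall i, (i < M.+1)%N -> c i.*2 = 0.
      apply: (AM1 (fun i => c i.*2)) => k hk.
      have := Hc k.*2 ltac:(lia); rewrite Wev [X in _ + X]big1;
        last by move=> i _; rewrite sE2 mulr0.
      by rewrite addr0 (eq_bigr (fun i : 'I_M.+1 => c i.*2 * rseq (k + i))) // => i _; rewrite sE1.
    have Ho : forall i, (i < M.+1)%N -> c i.*2.+1 = 0.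
      apply: (BM1 (fun i => c i.*2.+1)) => k hk.
      have := Hc k.*2.+1 ltac:(lia); rewrite Wev big1 ?add0r;
        last by move=> i _; rewrite sE3 mulr0.
      by rewrite (eq_bigr (fun i : 'I_M.+1 => c i.*2.+1 * rs (k + i))) // => i _; rewrite sE4.
    move=> i hi; apply: (ev_od c M.+1 M.+1) => //; lia.
Qed.

Theorem corollary4 (n : nat) : (1 <= n)%N ->
  is_linear_complexity rseq n (n.+1 %/ 2)%N.
Proof.
move=> n1.
have [m' Hm] : exists m', (n.+1 %/ 2 = m'.+1)%N by exists (n.+1 %/ 2).-1; lia.
rewrite Hm; set m := m'.+1.
have hnm : (n <= m.*2)%N by rewrite /m -Hm; lia.
have hmn : (m.*2 <= n.+1)%N by rewrite /m -Hm; lia.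
split.
- pose f (u : {ffun 'I_m -> 'F_2}) : {ffun 'I_m -> 'F_2} :=
    [ffun k : 'I_m => \sum_(i < m) u i * rseq (k + i)%N].
  have finj : injective f.
    move=> u v /ffunP H; apply/ffunP => j.
    pose c i := u (inord i) - v (inord i).
    have Hc : forall k, (k < m)%N -> W rseq c m k = 0.
      move=> k hk; rewrite /W /c.
      have -> : \sum_(i < m) (u (inord i) - v (inord i)) * rseq (k + i)%N
          = f u (Ordinal hk) - f v (Ordinal hk).
        by rewrite !ffunE -sumrB; apply: eq_bigr => i _; rewrite inord_val mulrBl.
      by rewrite H subrr.
    have := (proj1 (AB m)) c Hc j (ltn_ord j).
    by rewrite /c inord_val => /eqP; rewrite subr_eq0 => /eqP.
  have [g gK fK] := injF_bij finj.
  pose b : {ffun 'I_m -> 'F_2} := [ffun k : 'I_m => - rseq (k + m)%N].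
  set v := g b.
  have Hv : f v = b by rewrite /v fK.
  pose p : {poly 'F_2} := \poly_(i < m.+1) (if (i < m)%N then v (inord i) else 1).
  have sp : size p = m.+1 by rewrite size_poly_eq //= ltnn oner_neq0.
  exists p; split; last by rewrite sp.
  split.
    by rewrite monicE lead_coef_poly //= ltnn.
  right; rewrite sp /= => k hk.
  have hk' : (k < m)%N by lia.
  have Hk : \sum_(i < m) v i * rseq (k + i)%N = - rseq (k + m)%N.
    by have := congr1 (fun F : {ffun 'I_m -> 'F_2} => F (Ordinal hk')) Hv; rewrite !ffunE.
  rewrite big_ord_recr /= coef_poly ltnSn ltnn mul1r.
  rewrite (eq_bigr (fun i : 'I_m => v i * rseq (k + i)%N)); first by rewrite Hk addNr.
  by move=> i _; rewrite coef_poly /= ltnS (ltnW (ltn_ord i)) ltn_ord inord_val.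
- move=> c [mc Hc].
  rewrite leqNgt; apply/negP => hd.
  have c0 : c != 0 by apply: monic_neq0.
  have hd' : ~~ (n <= (size c).-1)%N by lia.
  case: Hc => [Hc|Hc]; first by rewrite Hc in hd'.
  have Hw : forall k, (k < (size c).-1.+1)%N -> W rseq (fun i => c`_i) (size c).-1.+1 k = 0.
    move=> k hk; apply: Hc; lia.
  have := (proj1 (AB (size c).-1.+1)) (fun i => c`_i) Hw (size c).-1 (ltnSn _).
  move=> H; move/monicP: mc; rewrite lead_coefE H => /eqP; by rewrite eq_sym oner_eq0.
Qed.
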